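(* Let $k$ be an algebraically closed field, $Q$ a finite acyclic quiver, and $M = (M_v, \varphi_a)_{v\in Q_0, a \in Q_1}$ a representation of $Q$ over $k$ of total dimension $n$ which is a brick, and let $w \in Q_0$ with $\dim_k M_w = m > 1$. Let $Q'$ be the quiver with $Q'_0 = Q_0 \cup \{w'\}$ ($w'$ a new vertex), $Q'_1 = Q_1 \cup \{e'\}$, where $s(e') = w'$, $t(e') = w$, and all arrows of $Q$ keep their source and target. Fix a basis of $\bigoplus_v M_v$ in which the first $m$ basis vectors span $M_w$, and let $f: kQ \to M_n(k)$ be the resulting homomorphism giving the action of $kQ$ on $M$. Then the $k$-algebra homomorphism $g: kQ' \to M_{n+1}(k\langle x_1,\dots,x_{m-1}\rangle)$ determined by $$g(a) = \begin{pmatrix} f(a) & 0 \\ 0 & 0\end{pmatrix} \ (a \in kQ),\quad g(e_{w'}) = \begin{pmatrix} 0 & 0 \\ 0 & 1 \end{pmatrix},\quad g(e') = \begin{pmatrix} 0 & X \\ 0 & 0 \end{pmatrix},$$ where $X = (1, x_1, \dots, x_{m-1}, 0, \dots, 0)^T$ is a column of length $n$, is a ring epimorphism.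
   Context: A representation is a brick if its endomorphism ring is $k$. $k\langle x_1,\dots,x_{m-1}\rangle$ is the free associative $k$-algebra. A ring homomorphism $\varphi: R \to S$ is a ring epimorphism if for any two ring homomorphisms $\varrho_1, \varrho_2: S \to T$ with $\varrho_1\varphi = \varrho_2\varphi$ one has $\varrho_1 = \varrho_2$. Arrows act by matrices supported in the (rows of the target vertex, columns of the source vertex) block. *)

(* Defs.v *)
From HB Require Import structures.
From mathcomp Require Import all_boot all_order all_algebra.
From mathcomp Require Import monalg.

Set Implicit Arguments.
Unset Strict Implicit.
Unset Printing Implicit Defensive.

Import GRing.Theory.
Local Open Scope ring_scope.

Definition quiver_rel (V E : finType) (src tgt : E -> V) : rel V :=
  fun u v => [exists a : E, (src a == u) && (tgt a == v)].

Definition acyclic_quiver (V E : finType) (src tgt : E -> V) : Prop :=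
  forall a : E, ~~ connect (quiver_rel src tgt) (tgt a) (src a).

(* Representations, written in a basis adapted to the decomposition     *)
(* M = (+)_v M_v: basis vector i : 'I_n lies in M_(blk i).  Arrows act  *)
(* (on column vectors) by n x n matrices supported in the block         *)
(* (rows of tgt a) x (columns of src a).                                *)

Definition rep_matrices (k : fieldType) (V E : finType) (src tgt : E -> V)
    (n : nat) (blk : 'I_n -> V) (A : E -> 'M[k]_n) : Prop :=
  forall (a : E) (i j : 'I_n), A a i j != 0 -> blk i = tgt a /\ blk j = src a.

(* the idempotent e_v acts as the projection onto M_v *)
Definition vertex_mx (k : fieldType) (V : finType) (n : nat) (blk : 'I_n -> V)
    (v : V) : 'M[k]_n :=
  \matrix_(i, j) ((i == j) && (blk i == v))%:R.

(* endomorphisms of the representation: families (h_v : M_v -> M_v)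
   i.e. block-diagonal matrices, commuting with all arrows *)
Definition rep_endo (k : fieldType) (V E : finType) (n : nat)
    (blk : 'I_n -> V) (A : E -> 'M[k]_n) (H : 'M[k]_n) : Prop :=
  (forall i j : 'I_n, blk i != blk j -> H i j = 0) /\
  (forall a : E, H *m A a = A a *m H).

Definition is_brick (k : fieldType) (V E : finType) (n : nat)
    (blk : 'I_n -> V) (A : E -> 'M[k]_n) : Prop :=
  forall H : 'M[k]_n, rep_endo blk A H -> exists c : k, H = c%:M.

(* Image of an algebra map out of a path algebra kQ, given by the       *)
(* images gv v of the trivial paths e_v and ge a of the arrows.         *)
(* A path is a start vertex v and a sequence of arrows a1 ... ar        *)
(* (a1 first) with src a1 = v and tgt a_i = src a_(i+1); paths form a   *)
(* k-basis of kQ, so the image of the map is the k-span of the images   *)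
(* of paths.                                                            *)

Fixpoint qpath_ok (V E : eqType) (src tgt : E -> V) (v : V) (s : seq E) : bool :=
  if s is a :: s' then (src a == v) && qpath_ok src tgt (tgt a) s' else true.

(* image of a path: trivial path e_v |-> gv v; a1 ... ar |-> ge ar * ... * ge a1
   (composition of maps acting on column vectors) *)
Definition path_img (V E : Type) (S : pzRingType) (gv : V -> S) (ge : E -> S)
    (v : V) (s : seq E) : S :=
  if s is [::] then gv v else foldr (fun a acc => acc * ge a) 1 s.

Definition path_alg_image (k : fieldType) (V E : eqType) (src tgt : E -> V)
    (S : pzRingType) (emb : k -> S) (gv : V -> S) (ge : E -> S) (x : S) : Prop :=
  exists ps : seq (k * (V * seq E)),
    all (fun p => qpath_ok src tgt p.2.1 p.2.2) ps /\
    x = \sum_(p <- ps) emb p.1 * path_img gv ge p.2.1 p.2.2.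

(* g : R -> S is a ring epimorphism; stated through the image of g:
   r1 \o g = r2 \o g  iff  r1, r2 agree on the image of g *)
Definition ring_epi_image (S : pzRingType) (img : S -> Prop) : Prop :=
  forall (T : pzRingType) (r1 r2 : {rmorphism S -> T}),
    (forall x, img x -> r1 x = r2 x) -> forall y, r1 y = r2 y.

(* The free associative algebra k<x_1, ..., x_(m-1)>: the monoid        *)
(* algebra of the free monoid on 'I_(m.-1).  The variable x_(j+1) is    *)
(* << fmu j >> for j : 'I_(m.-1).                                       *)

Definition free_alg (k : fieldType) (m : nat) := {malg k[{fmonom 'I_(m.-1)}]}.

(* the variable x_j (1 <= j <= m-1); 0 for other j *)
Definition fvar (k : fieldType) (m : nat) (j : nat) : free_alg k m :=
  match @insub nat (fun t => t < m.-1)%N _ j.-1 with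
  | Some o => if (0 < j)%N then << fmu o >> else 0
  | None => 0
  end.

Definition Xcol (k : fieldType) (m n : nat) : 'M[free_alg k m]_(n, 1) :=
  \matrix_(i, j) (if (i : nat) == 0%N then 1
                  else if (i < m)%N then fvar k m i else 0).

Definition fconst (k : fieldType) (m : nat) (c : k) : free_alg k m := c%:MP.

(* Q' : vertices option V (None = w'), arrows option E (None = e') *)
Definition src' (V E : Type) (src : E -> V) (a : option E) : option V :=
  if a is Some b then Some (src b) else None.
Definition tgt' (V E : Type) (tgt : E -> V) (w : V) (a : option E) : option V :=
  if a is Some b then Some (tgt b) else Some w.

Definition g_vertex (k : fieldType) (V : finType) (m n : nat) (blk : 'I_n -> V)
    (v : option V) : 'M[free_alg k m]_(n + 1) :=
  if v is Some u then block_mx (map_mx (@fconst k m) (vertex_mx k blk u)) 0 0 0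
  else block_mx 0 0 0 1.

Definition g_arrow (k : fieldType) (V E : finType) (m n : nat)
    (A : E -> 'M[k]_n) (a : option E) : 'M[free_alg k m]_(n + 1) :=
  if a is Some b then block_mx (map_mx (@fconst k m) (A b)) 0 0 0
  else block_mx 0 (Xcol k m n) 0 0.

Definition g_scalar (k : fieldType) (m n : nat) (c : k) : 'M[free_alg k m]_(n + 1) :=
  (fconst m c)%:M.

(* Main.v *)
Require Import Defs.
From HB Require Import structures.
From mathcomp Require Import all_boot all_order all_algebra.
From mathcomp Require Import monalg.
Set Implicit Arguments.
Unset Strict Implicit.
Unset Printing Implicit Defensive.
Import GRing.Theory.
From mathcomp Require Import zify.
From Stdlib Require Import Lia.

Section LinAlg.
Local Open Scope ring_scope.
Variables (k : fieldType) (n : nat) (G : seq 'M[k]_n).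
Hypothesis commG : forall Z : 'M[k]_n,
  (forall b, b \in G -> Z *m b = b *m Z) -> exists c : k, Z = c%:M.

Definition cidx := ('I_(size G) * ('I_n * 'I_n))%type.
Definition commt (t : cidx) : 'M[k]_n :=
  delta_mx t.2.1 t.2.2 *m nth 0 G t.1 - nth 0 G t.1 *m delta_mx t.2.1 t.2.2.

Lemma mxvec_mulE (Y : 'M[k]_n) (z : 'M[k]_(n * n)) c :
  (mxvec Y *m z) 0 c = \sum_a \sum_b Y a b * z (mxvec_index a b) c.
Proof.
rewrite mxE (reindex _ (curry_mxvec_bij _ _)) /=.
rewrite pair_bigA /=; apply: eq_bigr => [[a b]] _ /=; by rewrite mxvecE.
Qed.

Lemma tr_delta_mul (p q : 'I_n) (M : 'M[k]_n) : \tr (delta_mx p q *m M) = M q p.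
Proof.
rewrite /mxtrace (bigD1 p) //= big1 ?addr0.
  rewrite mxE (bigD1 q) //= big1 ?addr0 ?mxE ?eqxx ?mul1r //.
  by move=> j /negPf nj; rewrite mxE nj andbF mul0r.
move=> i /negPf ni; rewrite mxE big1 // => j _; by rewrite mxE ni mul0r.
Qed.

Lemma trace0_in_span (W : 'M[k]_n) : \tr W = 0 ->
  (mxvec W <= \sum_(t : cidx) <<mxvec (commt t)>>)%MS.
Proof.
move=> trW; set Vs := (\sum_(t : cidx) _)%MS.
have hV : forall t, mxvec (commt t) *m cokermx Vs = 0.
  move=> t; apply/eqP; rewrite -submxE; apply: (sumsmx_sup t) => //.
  by rewrite genmxE.
rewrite submxE; apply/eqP/matrixP => i c; rewrite ord1 [RHS]mxE.
set z := cokermx Vs.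
pose Zt : 'M[k]_n := \matrix_(a, b) z (mxvec_index b a) c.
have key : forall Y, (mxvec Y *m z) 0 c = \tr (Y *m Zt).
  move=> Y; rewrite mxvec_mulE /mxtrace; apply: eq_bigr => a _.
  rewrite [in RHS]mxE; apply: eq_bigr => b _. by rewrite [Zt _ _]mxE.
have comZ : forall b, b \in G -> Zt *m b = b *m Zt.
  move=> b bG; apply/matrixP => q p.
  have [ib ibE] : exists ib : 'I_(size G), nth 0 G ib = b.
    have hi : (index b G < size G)%N by rewrite index_mem.
    by exists (Ordinal hi); rewrite /= nth_index.
  move: (hV (ib, (p, q))) => /(congr1 (fun M : 'M[k]_(1, n * n) => M 0 c)).
  rewrite [RHS]mxE key /commt /= ibE mulmxBl raddfB /= -!mulmxA tr_delta_mul.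
  rewrite mxtrace_mulC -mulmxA tr_delta_mul => /eqP; rewrite subr_eq0 => /eqP.
  by move->.
have [c0 Zc] := commG comZ.
by rewrite key Zc mul_mx_scalar mxtraceZ trW mulr0.
Qed.

End LinAlg.

Section Dom.
Local Open Scope ring_scope.
Variables (k : fieldType) (n : nat) (G : seq 'M[k]_n).
Hypothesis commG : forall Z : 'M[k]_n,
  (forall b, b \in G -> Z *m b = b *m Z) -> exists c : k, Z = c%:M.
Variables (T : pzRingType) (r1 r2 : {additive 'M[k]_n -> T}).
Hypothesis r1M : forall x y, r1 (x *m y) = r1 x * r1 y.
Hypothesis r2M : forall x y, r2 (x *m y) = r2 x * r2 y.
Hypothesis rC : forall c, r1 c%:M = r2 c%:M.
Hypothesis rG : forall b, b \in G -> r1 b = r2 b.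
Variable i0 : 'I_n.

Lemma r1Z c x : r1 (c *: x) = r1 c%:M * r1 x.
Proof. by rewrite -mul_scalar_mx r1M. Qed.
Lemma r2Z c x : r2 (c *: x) = r2 c%:M * r2 x.
Proof. by rewrite -mul_scalar_mx r2M. Qed.
Lemma rCcomm c x : r1 x * r2 c%:M = r1 c%:M * r1 x.
Proof. by rewrite -rC -!r1M scalar_mxC. Qed.

Definition Om (a d : 'I_n) (Y : 'M[k]_n) :=
  \sum_i r1 (delta_mx a i) * r2 (Y *m delta_mx i d).

Lemma OmD a d Y Z : Om a d (Y + Z) = Om a d Y + Om a d Z.
Proof. by rewrite /Om -big_split; apply: eq_bigr => i _; rewrite mulmxDl raddfD mulrDr. Qed.
Lemma OmB a d Y Z : Om a d (Y - Z) = Om a d Y - Om a d Z.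
Proof. by rewrite /Om -sumrB; apply: eq_bigr => i _; rewrite mulmxBl raddfB mulrBr. Qed.
Lemma Om0 a d : Om a d 0 = 0.
Proof. by rewrite /Om big1 // => i _; rewrite mul0mx raddf0 mulr0. Qed.
Lemma OmZ a d c Y : Om a d (c *: Y) = r1 c%:M * Om a d Y.
Proof.
rewrite /Om mulr_sumr; apply: eq_bigr => i _.
by rewrite -scalemxAl r2Z mulrA rCcomm -mulrA.
Qed.
Lemma Omsum a d (I : Type) (r : seq I) (F : I -> 'M[k]_n) :
  Om a d (\sum_(t <- r) F t) = \sum_(t <- r) Om a d (F t).
Proof.
apply: (big_ind2 (fun x y => Om a d x = y)); first exact: Om0.
  by move=> x1 x2 y1 y2 <- <-; rewrite OmD.
by [].
Qed.

Lemma sum_ord_eq (F : 'I_n -> T) q : \sum_a (F a *+ (a == q)) = F q.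
Proof. by rewrite (bigD1 q) //= eqxx mulr1n big1 ?addr0 // => a /negPf ->. Qed.
Lemma sum_ord_eq' (F : 'I_n -> T) q : \sum_a (F a *+ (q == a)) = F q.
Proof. by rewrite -(sum_ord_eq F q); apply: eq_bigr => a _; rewrite eq_sym. Qed.

Lemma Om_comm a d Y b : r1 b = r2 b -> Om a d (Y *m b) = Om a d (b *m Y).
Proof.
move=> hb; rewrite /Om.
transitivity (\sum_i \sum_l r1 (b l i)%:M * (r1 (delta_mx a i) * r2 (Y *m delta_mx l d))).
  apply: eq_bigr => i _; rewrite -mulmxA.
  have -> : b *m delta_mx i d = \sum_l b l i *: delta_mx l d.
    rewrite {1}[b]matrix_sum_delta !mulmx_suml; apply: eq_bigr => l _.
    rewrite mulmx_suml (bigD1 i) //= big1 ?addr0.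
      by rewrite -scalemxAl mul_delta_mx.
    by move=> j /negPf nj; rewrite -scalemxAl mul_delta_mx_cond nj mulr0n scaler0.
  rewrite mulmx_sumr raddf_sum mulr_sumr; apply: eq_bigr => l _.
  by rewrite -scalemxAr r2Z mulrA rCcomm -mulrA.
rewrite exchange_big /=; apply: eq_bigr => l _.
rewrite -mulmxA [r2 (b *m _)]r2M -hb mulrA -r1M.
have -> : delta_mx a l *m b = \sum_i b l i *: delta_mx a i.
  rewrite {1}[b]matrix_sum_delta mulmx_sumr (bigD1 l) //= [X in _ + X]big1 ?addr0.
    by rewrite mulmx_sumr; apply: eq_bigr => i _; rewrite -scalemxAr mul_delta_mx.
  move=> j /negPf nj; rewrite mulmx_sumr big1 // => i _.
  by rewrite -scalemxAr mul_delta_mx_cond eq_sym nj mulr0n scaler0.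
rewrite raddf_sum mulr_suml; apply: eq_bigr => i _.
by rewrite r1Z mulrA.
Qed.

Lemma Om_trace0 a d W : \tr W = 0 -> Om a d W = 0.
Proof.
move=> /(trace0_in_span commG) /sub_sums_genmxP [u hu].
have -> : W = \sum_t (u t 0 0) *: commt (G:=G) t.
  apply: (can_inj (@mxvecK _ n n)); rewrite hu raddf_sum /=.
  apply: eq_bigr => t _; rewrite linearZ /=.
  by rewrite -mul_scalar_mx -mx11_scalar.
rewrite Omsum big1 // => t _; rewrite OmZ /commt OmB Om_comm ?subrr ?mulr0 //.
apply: rG; exact: mem_nth.
Qed.

Lemma tr_delta (p q : 'I_n) : \tr (delta_mx p q : 'M[k]_n) = (p == q)%:R.
Proof.
rewrite /mxtrace (bigD1 p) //= big1 ?addr0 ?mxE ?eqxx //=.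
by move=> i /negPf ni; rewrite mxE ni.
Qed.

Lemma dominion_mx Y : r1 Y = r2 Y.
Proof.
pose P := \sum_a Om a a (delta_mx i0 i0).
have OmE : forall a d, Om a d (delta_mx d a) = r1 (delta_mx a a) * r2 (delta_mx d d).
  move=> a d; rewrite /Om (bigD1 a) //= mul_delta_mx big1 ?addr0 // => i /negPf ni.
  by rewrite mul_delta_mx_cond eq_sym ni mulr0n raddf0 mulr0.
have e1 : r1 1%:M = r1 1%:M * r2 1%:M by rewrite -rC -r1M mulmx1.
have e2 : r1 1%:M * r2 1%:M = P.
  rewrite mx1_sum_delta raddf_sum mulr_suml /P; apply: eq_bigr => a _.
  rewrite raddf_sum mulr_sumr (bigD1 a) //= big1 ?addr0.
    rewrite -OmE; apply/eqP; rewrite -subr_eq0 -OmB; apply/eqP; apply: Om_trace0.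
    by rewrite raddfB /= !tr_delta !eqxx subrr.
  move=> d nd; rewrite -OmE Om_trace0 // tr_delta.
  by rewrite (negPf nd).
have hL1 : forall p q a, r1 (delta_mx p q) * Om a a (delta_mx i0 i0) =
    (r1 (delta_mx p i0) * r2 (delta_mx i0 a)) *+ (q == a).
  move=> p q a; rewrite /Om mulr_sumr (bigD1 i0) //= big1 ?addr0.
    by rewrite mulrA -r1M mul_delta_mx_cond mul_delta_mx raddfMn /= mulrnAl.
  move=> i /negPf ni.
  by rewrite mul_delta_mx_cond eq_sym ni mulr0n raddf0 !mulr0.
have hR1 : forall p q a, Om a a (delta_mx i0 i0) * r2 (delta_mx p q) =
    (r1 (delta_mx a i0) * r2 (delta_mx i0 q)) *+ (a == p).
  move=> p q a; rewrite /Om mulr_suml (bigD1 i0) //= big1 ?addr0.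
    by rewrite -mulrA -r2M mul_delta_mx mul_delta_mx_cond raddfMn /= mulrnAr.
  move=> i /negPf ni.
  by rewrite mul_delta_mx_cond eq_sym ni mulr0n raddf0 mulr0 mul0r.
have hE : forall p q, r1 (delta_mx p q) = r2 (delta_mx p q).
  move=> p q.
  have -> : r1 (delta_mx p q) = r1 (delta_mx p q) * P.
    by rewrite -e2 -e1 -r1M mulmx1.
  have -> : r2 (delta_mx p q) = P * r2 (delta_mx p q).
    by rewrite -e2 -e1 rC -r2M mul1mx.
  rewrite /P mulr_sumr mulr_suml.
  under eq_bigr => a _ do rewrite hL1.
  under [RHS]eq_bigr => a _ do rewrite hR1.
  rewrite sum_ord_eq'.
  by rewrite (sum_ord_eq (fun a => r1 (delta_mx a i0) * r2 (delta_mx i0 q))).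
rewrite [Y]matrix_sum_delta !raddf_sum; apply: eq_bigr => p _.
rewrite !raddf_sum; apply: eq_bigr => q _.
by rewrite r1Z r2Z rC hE.
Qed.
End Dom.

Local Open Scope ring_scope.

Definition emb (k : fieldType) (m n : nat) (Y : 'M[k]_n) : 'M[free_alg k m]_(n + 1) :=
  block_mx (map_mx (@fconst k m) Y) 0 0 0.

Lemma map_fconst (k : fieldType) m p q (Y : 'M[k]_(p, q)) :
  map_mx (@fconst k m) Y = map_mx (@malgC {fmonom 'I_(m.-1)} k) Y.
Proof. by []. Qed.


Lemma emb_is_zmod_morphism (k : fieldType) m n : zmod_morphism (@emb k m n).
Proof.
move=> x y; by rewrite /emb !map_fconst map_mxB opp_block_mx add_block_mx !oppr0 !addr0 -map_mxB.
Qed.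
HB.instance Definition _ (k : fieldType) m n :=
  GRing.isZmodMorphism.Build _ _ (@emb k m n) (@emb_is_zmod_morphism k m n).

Lemma embM (k : fieldType) m n (x y : 'M[k]_n) :
  @emb k m n (x *m y) = emb m x * emb m y.
Proof.
rewrite /emb -mulmxE mulmx_block !mulmx0 !mul0mx !addr0 !map_fconst.
by rewrite map_mxM.
Qed.

Lemma DDlem (R : pzRingType) N (p q r s : 'I_N) (M : 'M[R]_N) :
  delta_mx p q *m M *m delta_mx r s = M q r *: delta_mx p s.
Proof.
apply/matrixP => i j; rewrite !mxE (bigD1 r) //= big1 ?addr0; last first.
  by move=> l /negPf nl; rewrite [delta_mx r s l j]mxE nl mulr0.
rewrite [delta_mx r s r j]mxE eqxx /= mxE (bigD1 q) //= big1 ?addr0; last first.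
  by move=> l /negPf nl; rewrite [delta_mx p q i l]mxE nl andbF mul0r.
rewrite [delta_mx p q i q]mxE eqxx andbT.
by case: (i == p); case: (j == s); rewrite ?mul1r ?mul0r ?mulr1 ?mulr0.
Qed.

Section Main.
Variables (k : fieldType) (V E : finType) (src tgt : E -> V) (n : nat)
  (blk : 'I_n -> V) (A : E -> 'M[k]_n) (w : V) (m : nat).
Hypotheses (hbrick : is_brick blk A) (hm1 : (1 < m)%N) (hmn : (m <= n)%N)
  (hblk : forall i : 'I_n, (blk i == w) = ((i : nat) < m)%N).
Variables (T : pzRingType) (r1 r2 : {rmorphism 'M[free_alg k m]_(n + 1) -> T}).
Hypothesis hD : forall x, path_alg_image (src' src) (tgt' tgt w)
  (@g_scalar k m n) (@g_vertex k V m n blk) (@g_arrow k V E m n A) x -> r1 x = r2 x.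

Local Notation S := 'M[free_alg k m]_(n + 1).
Local Notation D y := (r1 y = r2 y).

Lemma DB (x y : S) : D x -> D y -> D (x - y).
Proof. by move=> hx hy; rewrite !rmorphB hx hy. Qed.
Lemma DA (x y : S) : D x -> D y -> D (x + y).
Proof. by move=> hx hy; rewrite !rmorphD hx hy. Qed.
Lemma DM (x y : S) : D x -> D y -> D (x * y).
Proof. by move=> hx hy; rewrite !rmorphM hx hy. Qed.
Lemma D1 : D (1 : S).
Proof. by rewrite !rmorph1. Qed.
Lemma D0 : D (0 : S).
Proof. by rewrite !rmorph0. Qed.
Lemma Dsum (I : Type) (r : seq I) (F : I -> S) :
  (forall i, D (F i)) -> D (\sum_(i <- r) F i).
Proof.
move=> h; apply: (big_ind (fun x => D x)) => //; [exact: D0 | exact: DA].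
Qed.

Lemma gscal1 : @g_scalar k m n 1 = 1.
Proof. by rewrite /g_scalar /fconst mpolyC1E. Qed.

Lemma Dpath c v s : qpath_ok (src' src) (tgt' tgt w) v s ->
  D (@g_scalar k m n c * path_img (@g_vertex k V m n blk) (@g_arrow k V E m n A) v s).
Proof.
move=> ok; apply: hD; exists [:: (c, (v, s))]; split; first by rewrite /= ok.
by rewrite big_seq1.
Qed.

Lemma Dvertex v : D (@g_vertex k V m n blk v).
Proof. by move: (Dpath 1 (v := v) (s := [::]) isT); rewrite gscal1 mul1r. Qed.

Lemma Darrow a : D (@g_arrow k V E m n A a).
Proof.
have := Dpath 1 (v := src' src a) (s := [:: a]).
by rewrite /= eqxx gscal1 !mul1r; apply.
Qed.

Lemma vsum : \sum_(u : V) @vertex_mx k V n blk u = 1%:M.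
Proof.
apply/matrixP => i j; rewrite summxE (bigD1 (blk i)) //= big1 ?addr0.
  by rewrite !mxE eqxx andbT.
by move=> u; rewrite eq_sym => /negPf nu; rewrite /vertex_mx mxE nu andbF.
Qed.

Lemma emb1 : @emb k m n 1%:M = \sum_(u : V) @g_vertex k V m n blk (Some u).
Proof. by rewrite -vsum raddf_sum. Qed.

Lemma gvsum : @g_vertex k V m n blk None + \sum_(u : V) @g_vertex k V m n blk (Some u) = 1.
Proof.
rewrite -emb1 /emb /= add_block_mx !addr0 add0r map_fconst map_mx1.
by rewrite -scalar_mx_block.
Qed.

Lemma Dgscal c : D (@g_scalar k m n c).
Proof.
rewrite -[g_scalar _ _ _]mulr1 -gvsum mulrDr mulr_sumr.
apply: DA; first exact: (Dpath c (v := None) (s := [::])).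
by apply: Dsum => u; exact: (Dpath c (v := Some u) (s := [::])).
Qed.

Lemma Dembscal c : D (@emb k m n c%:M).
Proof.
have -> : @emb k m n c%:M = @g_scalar k m n c * emb m 1%:M.
  rewrite /emb /g_scalar -mulmxE mul_scalar_mx scale_block_mx !scaler0.
  by rewrite !map_fconst !map_scalar_mx scalemx1.
apply: DM; first exact: Dgscal.
by rewrite emb1; apply: Dsum => u; exact: Dvertex.
Qed.

Definition Gs := [seq @vertex_mx k V n blk v | v <- enum V] ++ [seq A a | a <- enum E].

Lemma vtxR (Z : 'M[k]_n) v i j : (Z *m @vertex_mx k V n blk v) i j = Z i j * (blk j == v)%:R.
Proof.
rewrite mxE (bigD1 j) //= big1 ?addr0; first by rewrite mxE eqxx.
by move=> l /negPf nl; rewrite mxE nl mulr0.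
Qed.
Lemma vtxL (Z : 'M[k]_n) v i j : (@vertex_mx k V n blk v *m Z) i j = (blk i == v)%:R * Z i j.
Proof.
rewrite mxE (bigD1 i) //= big1 ?addr0; first by rewrite mxE eqxx.
by move=> l /negPf nl; rewrite mxE eq_sym nl mul0r.
Qed.

Lemma commGs (Z : 'M[k]_n) : (forall b, b \in Gs -> Z *m b = b *m Z) -> exists c, Z = c%:M.
Proof.
move=> h; apply: hbrick; split.
  move=> i j nij.
  have := h (@vertex_mx k V n blk (blk j)).
  rewrite mem_cat map_f ?mem_enum // => /(_ isT) /(congr1 (fun M : 'M[k]_n => M i j)).
  by rewrite vtxR vtxL eqxx (negPf nij) mulr1 mul0r.
move=> a; apply: h; by rewrite mem_cat orbC map_f ?mem_enum.
Qed.

Lemma n0 : (0 < n)%N.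
Proof. by apply: leq_trans hmn; apply: ltnW. Qed.

Lemma Demb (Y : 'M[k]_n) : D (@emb k m n Y).
Proof.
pose rho1 : {additive 'M[k]_n -> T} := r1 \o @emb k m n.
pose rho2 : {additive 'M[k]_n -> T} := r2 \o @emb k m n.
have := @dominion_mx k n Gs commGs T rho1 rho2 _ _ _ _ (Ordinal n0) Y; apply.
- by move=> x y; rewrite /rho1 /= embM rmorphM.
- by move=> x y; rewrite /rho2 /= embM rmorphM.
- by move=> c; exact: Dembscal.
move=> b; rewrite mem_cat => /orP [] /mapP [x _ ->].
  exact: (Dvertex (Some x)).
exact: (Darrow (Some x)).
Qed.

Local Notation U a b := (delta_mx a b : S).
Local Notation L i := (lshift 1 i).
Local Notation R := (rshift n (ord0 : 'I_1)).
Local Notation i0 := (Ordinal n0).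

Lemma embU (i j : 'I_n) : @emb k m n (delta_mx i j) = U (L i) (L j).
Proof.
by rewrite /emb delta_mx_ushift delta_mx_lshift map_fconst map_delta_mx /block_mx row_mx0.
Qed.

Lemma DULL i j : D (U (L i) (L j)).
Proof. by rewrite -embU; exact: Demb. Qed.

Lemma gvNone : @g_vertex k V m n blk None = U R R.
Proof.
rewrite /g_vertex delta_mx_dshift delta_mx_rshift /block_mx row_mx0.
congr (col_mx 0 (row_mx 0 _)); by apply/matrixP => a b; rewrite !ord1 !mxE.
Qed.

Lemma DURR : D (U R R).
Proof. by rewrite -gvNone; exact: (Dvertex None). Qed.

Lemma Ecol_entry (i : 'I_n) :
  (@g_arrow k V E m n A None) (L i) R = Xcol k m n i 0.
Proof. by rewrite /g_arrow block_mxEur. Qed.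

Lemma zig (y q : S) : D q -> D (y * q) -> D (q * y) -> y * q * y = y -> D y.
Proof.
move=> hq hyq hqy e.
have h1 : r2 y = r1 (y * q) * r2 y by rewrite hyq -rmorphM e.
have h2 : r1 y = r1 y * r2 (q * y) by rewrite -hqy -rmorphM mulrA e.
by rewrite h2 rmorphM mulrA -hq -rmorphM -h1.
Qed.

Lemma DULR : D (U (L i0) R).
Proof.
have := DDlem (L i0) (L i0) R R (@g_arrow k V E m n A None).
rewrite Ecol_entry mxE /= scale1r => <-.
apply: DM; last exact: DURR.
apply: DM; [exact: DULL | exact: (Darrow None)].
Qed.

Lemma DURL : D (U R (L i0)).
Proof.
apply: (zig DULR).
- by rewrite -mulmxE mul_delta_mx; exact: DURR.
- by rewrite -mulmxE mul_delta_mx; exact: DULL.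
by rewrite -!mulmxE !mul_delta_mx.
Qed.

Lemma DU a b : D (U a b).
Proof.
have -> : U a b = U a (L i0) * U (L i0) b by rewrite -mulmxE mul_delta_mx.
apply: DM.
  rewrite -(splitK a); case: (split a) => a' /=; first exact: DULL.
  by rewrite (ord1 a'); exact: DURL.
rewrite -(splitK b); case: (split b) => b' /=; first exact: DULL.
by rewrite (ord1 b'); exact: DULR.
Qed.

Lemma delta_diag (RR : pzRingType) N (a : 'I_N) : (delta_mx a a : 'M[RR]_N) a a = 1.
Proof. by rewrite mxE !eqxx. Qed.

Lemma Dvar (o : 'I_(m.-1)) : D ((<< fmu o >> : free_alg k m)%:M).
Proof.
have ho : (o.+1 < n)%N.
  have := ltn_ord o; lia.
have om : (o.+1 < m)%N by have := ltn_ord o; lia.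
have ex : Xcol k m n (Ordinal ho) 0 = << fmu o >>.
  rewrite mxE.
  have -> : (Ordinal ho == 0%N :> nat) = false by [].
  have -> : (Ordinal ho < m)%N = true by exact: om.
  rewrite /fvar; case: insubP => [o' _ ho'|]; last by rewrite ltn_ord.
  have -> : (0 < Ordinal ho)%N = true by [].
  by congr << fmu _ >>; apply: val_inj; rewrite ho'.
pose j := Ordinal ho.
have hZ := DDlem (L j) (L j) R (L j) (@g_arrow k V E m n A None).
rewrite Ecol_entry ex in hZ.
have DZ : D (<< fmu o >> *: U (L j) (L j)).
  rewrite -hZ; apply: DM; last exact: DU.
  apply: DM; [exact: DU | exact: (Darrow None)].
rewrite scalar_mx_sum_delta; apply: Dsum => a.
have -> : << fmu o >> *: U a a = U a (L j) * (<< fmu o >> *: U (L j) (L j)) * U (L j) a.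
  rewrite -!mulmxE (DDlem a (L j) (L j) a); congr (_ *: _).
  by rewrite mxE delta_diag; exact/esym/mulr1.
by apply: DM; [apply: DM; [exact: DU | exact: DZ] | exact: DU].
Qed.

Lemma DscalF (c : free_alg k m) : D (c%:M).
Proof.
rewrite [c]monalgE.
suff H : forall r : seq {fmonom 'I_(m.-1)}, D ((\sum_(j <- r) << c@_j *g j >>)%:M) by apply: H.
elim=> [|mm r IH].
  rewrite big_nil.
  have -> : (0 : free_alg k m)%:M = 0 :> S by exact: raddf0.
  exact: D0.
rewrite big_cons.
have -> : (<< c@_mm *g mm >> + \sum_(j <- r) << c@_j *g j >>)%:M =
  << c@_mm *g mm >>%:M + (\sum_(j <- r) << c@_j *g j >>)%:M :> S by exact: raddfD.
apply: DA => //.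
have -> : << c@_mm *g mm >> = (c@_mm)%:MP * << mm >> :> free_alg k m.
  by rewrite malgM_def fgmulUU mulr1 mul1m.
rewrite scalar_mxM; apply: DM; first exact: Dgscal.
case: mm => s; elim: s => [|i s IH'].
  have -> : FMonom [::] = (mone : {fmonom 'I_(m.-1)}) by apply: val_inj; rewrite /= fm1.
  exact: D1.
have -> : FMonom (i :: s) = mmul (fmu i) (FMonom s).
  by apply: val_inj; rewrite /= fmM fmU.
have -> : << mmul (fmu i) (FMonom s) >> = << fmu i >> * << FMonom s >> :> free_alg k m.
  by rewrite malgM_def fgmulUU mulr1.
rewrite scalar_mxM; apply: DM; [exact: Dvar | exact: IH'].
Qed.

Lemma Dall (y : S) : D y.
Proof.
rewrite [y]matrix_sum_delta; apply: Dsum => a; apply: Dsum => b.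
rewrite -mul_scalar_mx; apply: DM; [exact: DscalF | exact: DU].
Qed.
End Main.

Close Scope ring_scope.

Theorem mainTheorem14 (k : closedFieldType) (V E : finType) (src tgt : E -> V)
    (n : nat) (blk : 'I_n -> V) (A : E -> 'M[k]_n) (w : V) (m : nat) :
  acyclic_quiver src tgt ->
  rep_matrices src tgt blk A ->
  is_brick blk A ->
  (1 < m)%N -> (m <= n)%N ->
  (forall i : 'I_n, (blk i == w) = ((i : nat) < m)%N) ->
  ring_epi_image
    (path_alg_image (src' src) (tgt' tgt w)
       (@g_scalar k m n) (@g_vertex k V m n blk) (@g_arrow k V E m n A)).
Proof.
move=> _ _ hbrick hm1 hmn hblk T r1 r2 hD y.
exact: (Dall hbrick hm1 hmn hD y).
Qed.
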